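(* Let $\odot$ be a non-degenerate pseudo-multiplication and let $\tau$ be a $\sigma$-maxitive measure on a $\sigma$-algebra $\mathcal{B}$ on a nonempty set $E$ having the Radon–Nikodym property with respect to the idempotent $\odot$-integral. Then $\tau$ has no $\odot$-spot. That is, there is no $B_0\in\mathcal{B}$ such that $\tau(B_0)$ is $\odot$-infinite and, for every $A\in\mathcal{B}$ with $A\subset B_0$, $\tau(A)$ is either $0$ or $\odot$-infinite.
   Context: Write $\overline{\mathbb{R}}_+=[0,\infty]$. A pseudo-multiplication is a binary operation $\odot$ on $\overline{\mathbb{R}}_+$ with the following properties: - it is associative; - it is continuous on $(0,\infty)\times[0,\infty]$; - for every $t$, the map $s\mapsto s\odot t$ is continuous on $(0,\infty]$; - it is nondecreasing in each argument; - it has a left identity $1_\odot$, i.e. $1_\odot\odot t=t$ for all $t$; - it has no zero divisors, i.e. $s\odot t=0$ implies $s=0$ or $t=0$; - $0\odot t=t\odot 0=0$ for all $t$. Put $O(t)=\inf_{s>0}s\odot t$. An element $t$ is $\odot$-finite if $O(t)=0$, and $\odot$-infinite otherwise. The operation $\odot$ is non-degenerate if $1_\odot$ is $\odot$-finite. A $\sigma$-maxitive measure on $\mathcal{B}$ is a map $\nu:\mathcal{B}\to\overline{\mathbb{R}}_+$ with $\nu(\emptyset)=0$ and $\nu(\bigcup_j B_j)=\sup_j\nu(B_j)$ for every countable family. A map $f:E\to\overline{\mathbb{R}}_+$ is $\mathcal{B}$-measurable if $\{f>t\}\in\mathcal{B}$ for all $t\in[0,\infty)$. The idempotent $\odot$-integral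 is $\int^\infty_B f\odot d\tau=\sup_{t\in[0,\infty)}t\odot\tau(B\cap\{f>t\})$. $\nu\ll_\odot\tau$ means $\nu(B)\le\infty\odot\tau(B)$ for every $B\in\mathcal{B}$ with $\tau(B)$ $\odot$-finite. $\tau$ has the Radon–Nikodym property if every $\sigma$-maxitive $\nu\ll_\odot\tau$ admits a $\mathcal{B}$-measurable $c:E\to\overline{\mathbb{R}}_+$ with $\nu(B)=\int^\infty_B c\odot d\tau$ for all $B\in\mathcal{B}$. *)

(* Defs.v *)
From Stdlib Require Import Reals.
Open Scope R_scope.
Set Implicit Arguments.

Definition Rnn := {x : R | 0 <= x}.
Inductive ERp : Type := Fin (x : Rnn) | Inf.

Definition zeroE : ERp := Fin (exist _ 0 (Rle_refl 0)).

Definition leE (a b : ERp) : Prop :=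
  match a, b with
  | Fin x, Fin y => proj1_sig x <= proj1_sig y
  | _, Inf => True
  | Inf, Fin _ => False
  end.
Definition ltE (a b : ERp) : Prop := ~ leE b a.

Definition is_finE (a : ERp) : Prop := exists x, a = Fin x.

Definition is_lubE (S : ERp -> Prop) (s : ERp) : Prop :=
  (forall u, S u -> leE u s) /\ (forall v, (forall u, S u -> leE u v) -> leE s v).
Definition is_glbE (S : ERp -> Prop) (s : ERp) : Prop :=
  (forall u, S u -> leE s u) /\ (forall v, (forall u, S u -> leE v u) -> leE v s).

Definition ballE (a : ERp) (eps : R) (b : ERp) : Prop :=
  match a, b with
  | Fin x, Fin y => Rabs (proj1_sig y - proj1_sig x) < eps
  | Fin _, Inf => False
  | Inf, Inf => True
  | Inf, Fin y => / eps < proj1_sig y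
  end.
Definition nearE (a : ERp) (P : ERp -> Prop) : Prop :=
  exists eps, 0 < eps /\ forall b, ballE a eps b -> P b.

Definition cont_at_rel (D : ERp -> Prop) (g : ERp -> ERp) (a : ERp) : Prop :=
  forall V, nearE (g a) V -> nearE a (fun b => D b -> V (g b)).
Definition cont2_at_rel (D1 D2 : ERp -> Prop) (g : ERp -> ERp -> ERp) (a1 a2 : ERp) : Prop :=
  forall V, nearE (g a1 a2) V ->
    exists U1 U2, nearE a1 U1 /\ nearE a2 U2 /\
      forall b1 b2, D1 b1 -> D2 b2 -> U1 b1 -> U2 b2 -> V (g b1 b2).

Definition posfin (s : ERp) : Prop := ltE zeroE s /\ is_finE s.
Definition pos (s : ERp) : Prop := ltE zeroE s.

Definition pseudo_mult (mul : ERp -> ERp -> ERp) (one : ERp) : Prop :=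
  (forall a b c, mul (mul a b) c = mul a (mul b c)) /\
  (forall s t, posfin s -> cont2_at_rel posfin (fun _ => True) mul s t) /\
  (forall t s, pos s -> cont_at_rel pos (fun u => mul u t) s) /\
  (forall s s' t, leE s s' -> leE (mul s t) (mul s' t)) /\
  (forall s t t', leE t t' -> leE (mul s t) (mul s t')) /\
  (forall t, mul one t = t) /\
  (forall s t, mul s t = zeroE -> s = zeroE \/ t = zeroE) /\
  (forall t, mul zeroE t = zeroE /\ mul t zeroE = zeroE).

Definition odot_finite (mul : ERp -> ERp -> ERp) (t : ERp) : Prop :=
  is_glbE (fun u => exists s, ltE zeroE s /\ u = mul s t) zeroE.
Definition odot_infinite mul t : Prop := ~ odot_finite mul t.

Definition non_degenerate mul one : Prop := odot_finite mul one.

Definition sigma_algebra {E : Type} (B : (E -> Prop) -> Prop) : Prop :=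
  B (fun _ => False) /\
  (forall A, B A -> B (fun x => ~ A x)) /\
  (forall F : nat -> E -> Prop, (forall j, B (F j)) -> B (fun x => exists j, F j x)).

Definition sigma_maxitive {E : Type} (B : (E -> Prop) -> Prop) (nu : (E -> Prop) -> ERp) : Prop :=
  nu (fun _ => False) = zeroE /\
  forall F : nat -> E -> Prop, (forall j, B (F j)) ->
    is_lubE (fun u => exists j, u = nu (F j)) (nu (fun x => exists j, F j x)).

Definition measurable {E : Type} (B : (E -> Prop) -> Prop) (f : E -> ERp) : Prop :=
  forall t, is_finE t -> B (fun x => ltE t (f x)).

Definition idem_integral_is {E : Type} mul (tau : (E -> Prop) -> ERp)
  (A : E -> Prop) (f : E -> ERp) (v : ERp) : Prop :=
  is_lubE (fun u => exists t, is_finE t /\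
             u = mul t (tau (fun x => A x /\ ltE t (f x)))) v.

Definition abs_cont {E : Type} mul (B : (E -> Prop) -> Prop) (nu tau : (E -> Prop) -> ERp) : Prop :=
  forall A, B A -> odot_finite mul (tau A) -> leE (nu A) (mul Inf (tau A)).

Definition radon_nikodym {E : Type} mul (B : (E -> Prop) -> Prop) (tau : (E -> Prop) -> ERp) : Prop :=
  forall nu, sigma_maxitive B nu -> abs_cont mul B nu tau ->
    exists c : E -> ERp, measurable B c /\
      forall A, B A -> idem_integral_is mul tau A c (nu A).

Definition has_spot {E : Type} mul (B : (E -> Prop) -> Prop) (tau : (E -> Prop) -> ERp) : Prop :=
  exists B0, B B0 /\ odot_infinite mul (tau B0) /\
    forall A, B A -> (forall x, A x -> B0 x) ->
      tau A = zeroE \/ odot_infinite mul (tau A).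

(* Main.v *)
Require Import Defs.
From Stdlib Require Import Reals.
From Stdlib Require Import Classical ClassicalEpsilon FunctionalExtensionality PropExtensionality ProofIrrelevance Lra.

Lemma le0 x : leE zeroE x.
Proof. destruct x as [[r p]|]; simpl; auto. Qed.

Lemma le_refl x : leE x x.
Proof. destruct x as [[r p]|]; simpl; auto. apply Rle_refl. Qed.

Lemma le_trans x y z : leE x y -> leE y z -> leE x z.
Proof. destruct x as [[r p]|], y as [[r' p']|], z as [[r'' p'']|]; simpl; try tauto; lra. Qed.

Lemma le0_eq x : leE x zeroE -> x = zeroE.
Proof.
  destruct x as [[r p]|]; simpl; [|tauto]. intro H.
  assert (r = 0) by lra. subst. unfold zeroE. f_equal. f_equal. apply proof_irrelevance.
Qed.

Lemma inf_pos : ltE zeroE Inf.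
Proof. unfold ltE; simpl; tauto. Qed.

Lemma pos_of_ne0 t : t <> zeroE -> ltE zeroE t.
Proof. intros H Hle. apply H, le0_eq, Hle. Qed.

Section S.
Variable mul : ERp -> ERp -> ERp.
Variable one : ERp.
Hypothesis PM : pseudo_mult mul one.

Lemma fin_mono t t' : leE t t' -> odot_finite mul t' -> odot_finite mul t.
Proof.
  destruct PM as (_&_&_&_&mono2&_).
  intros Hle [H1 H2]. split.
  - intros u _. apply le0.
  - intros v Hv. apply H2. intros u [s [Hs ->]].
    apply (le_trans v (mul s t) (mul s t')); [apply Hv; eauto| apply mono2; auto].
Qed.

Lemma inf_mul t u : ltE zeroE t -> odot_infinite mul u -> odot_infinite mul (mul t u).
Proof.
  destruct PM as (assoc&_&_&_&_&_&nzd&z).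
  intros Ht Hu [H1 H2]. apply Hu. split.
  - intros w _. apply le0.
  - intros v Hv. apply H2. intros w [s [Hs ->]].
    rewrite <- assoc. apply Hv. exists (mul s t). split; auto.
    apply pos_of_ne0. intro E0. destruct (nzd _ _ E0) as [->| ->].
    + apply Hs, le_refl.
    + apply Ht, le_refl.
Qed.

Lemma zero_finite : odot_finite mul zeroE.
Proof.
  destruct PM as (_&_&_&_&_&_&_&z).
  split.
  - intros; apply le0.
  - intros v Hv. apply Hv. exists Inf. split. apply inf_pos. symmetry. apply z.
Qed.

Lemma one_ne0 : one <> zeroE.
Proof.
  destruct PM as (_&_&_&_&_&id&_&z).
  intro H. assert (HI := id Inf). rewrite H, (proj1 (z Inf)) in HI. discriminate.
Qed.
End S.

Section T.
Variable E : Type.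
Variable B : (E -> Prop) -> Prop.
Hypothesis SA : sigma_algebra B.
Variable tau : (E -> Prop) -> ERp.
Hypothesis SM : sigma_maxitive B tau.

Lemma B_inter X Y : B X -> B Y -> B (fun x => X x /\ Y x).
Proof.
  destruct SA as (_&Hc&Hu). intros HX HY.
  set (F := fun j : nat => if j then (fun x => ~ X x) else (fun x => ~ Y x)).
  assert (HF : forall j, B (F j)) by (intros [|j]; simpl; auto).
  specialize (Hc _ (Hu F HF)).
  replace (fun x => X x /\ Y x) with (fun x => ~ (exists j, F j x)); auto.
  apply functional_extensionality; intro x. apply propositional_extensionality.
  split.
  - intro H. split; apply NNPP; intro H'; apply H; [exists 0%nat|exists 1%nat]; exact H'.
  - intros [H1 H2] [[|j] Hj]; simpl in Hj; auto.
Qed.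

Lemma tau_mono X Y : B X -> B Y -> (forall x, X x -> Y x) -> leE (tau X) (tau Y).
Proof.
  destruct SM as (_&Hm). intros HX HY Hs.
  set (F := fun j : nat => if j then X else Y).
  assert (HF : forall j, B (F j)) by (intros [|j]; simpl; auto).
  destruct (Hm F HF) as [H1 _].
  replace (tau Y) with (tau (fun x => exists j, F j x)).
  - apply H1. exists 0%nat. reflexivity.
  - f_equal. apply functional_extensionality; intro x. apply propositional_extensionality.
    split.
    + intros [[|j] Hj]; simpl in Hj; auto.
    + intro; exists 1%nat; auto.
Qed.
End T.

Theorem mainTheorem7 (mul : ERp -> ERp -> ERp) (one : ERp)
  (E : Type) (B : (E -> Prop) -> Prop) (tau : (E -> Prop) -> ERp) :
  pseudo_mult mul one -> non_degenerate mul one ->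
  inhabited E -> sigma_algebra B -> sigma_maxitive B tau ->
  radon_nikodym mul B tau ->
  ~ has_spot mul B tau.
Proof.
  intros PM ND _ SA SM RN [B0 [HB0 [Hinf Hspot]]].
  pose proof PM as (assoc&_&_&_&_&id&nzd&z).
  set (nu := fun A : E -> Prop =>
     if excluded_middle_informative (tau (fun x => A x /\ B0 x) = zeroE) then zeroE else one).
  assert (Hnu0 : forall A, tau (fun x => A x /\ B0 x) = zeroE -> nu A = zeroE).
  { intros A H. unfold nu. destruct excluded_middle_informative; tauto. }
  assert (Hnu1 : forall A, tau (fun x => A x /\ B0 x) <> zeroE -> nu A = one).
  { intros A H. unfold nu. destruct excluded_middle_informative; tauto. }
  assert (Hsm : sigma_maxitive B nu).
  { split.
    - apply Hnu0. rewrite <- (proj1 SM). f_equal.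
      apply functional_extensionality; intro x. apply propositional_extensionality. tauto.
    - intros F HF.
      set (G := fun j x => F j x /\ B0 x).
      assert (HG : forall j, B (G j)) by (intro j; apply B_inter; auto).
      destruct (proj2 SM G HG) as [L1 L2].
      assert (EU : (fun x => (exists j, F j x) /\ B0 x) = (fun x => exists j, G j x)).
      { apply functional_extensionality; intro x. apply propositional_extensionality.
        unfold G. firstorder. }
      destruct (classic (tau (fun x => exists j, G j x) = zeroE)) as [H0|H0].
      + rewrite Hnu0 by (rewrite EU; auto). split.
        * intros u [j ->]. rewrite Hnu0. apply le_refl.
          apply le0_eq. rewrite <- H0. apply L1. exists j. reflexivity.
        * intros; apply le0.
      + rewrite Hnu1 by (rewrite EU; auto).
        assert (Hj : exists j, tau (G j) <> zeroE).
        { apply NNPP; intro Hn. apply H0, le0_eq, L2. intros u [j ->].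
          destruct (classic (tau (G j) = zeroE)) as [e|e]; [rewrite e; apply le_refl|].
          exfalso; eauto. }
        destruct Hj as [j Hj]. split.
        * intros u [k ->]. destruct (classic (tau (G k) = zeroE)) as [e|e].
          -- rewrite Hnu0 by exact e. apply le0.
          -- rewrite Hnu1 by exact e. apply le_refl.
        * intros v Hv. specialize (Hv (nu (F j)) (ex_intro _ j eq_refl)).
          rewrite Hnu1 in Hv by exact Hj. exact Hv. }
  assert (Hac : abs_cont mul B nu tau).
  { intros A HA Hfin. rewrite Hnu0. apply le0.
    destruct (Hspot (fun x => A x /\ B0 x)) as [e|e]; auto.
    - apply B_inter; auto.
    - intros x [_ h]; exact h.
    - exfalso. apply e. eapply (@fin_mono mul one PM); [ |exact Hfin].
      apply (@tau_mono E B tau SM); auto. apply B_inter; auto. intros x [h _]; exact h. }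
  destruct (RN nu Hsm Hac) as [c [Hc Hint]].
  specialize (Hint B0 HB0). unfold idem_integral_is in Hint.
  assert (HB0B0 : tau (fun x => B0 x /\ B0 x) = tau B0).
  { f_equal. apply functional_extensionality; intro x. apply propositional_extensionality. tauto. }
  assert (Htb : tau B0 <> zeroE).
  { intro e. apply Hinf. rewrite e. apply (@zero_finite mul one PM). }
  rewrite Hnu1 in Hint by (rewrite HB0B0; exact Htb).
  destruct Hint as [I1 I2].
  destruct (classic (exists t, is_finE t /\
       mul t (tau (fun x => B0 x /\ ltE t (c x))) <> zeroE)) as [[t [Ht Hne]]|Hn].
  - set (u := tau (fun x => B0 x /\ ltE t (c x))) in *.
    assert (Htp : t <> zeroE) by (intro e; apply Hne; rewrite e; apply z).
    assert (Hup : u <> zeroE) by (intro e; apply Hne; rewrite e; apply z).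
    assert (Hui : odot_infinite mul u).
    { destruct (Hspot (fun x => B0 x /\ ltE t (c x))) as [e|e]; [ | | tauto | tauto].
      - apply B_inter; auto.
      - intros x [h _]; exact h. }
    apply (@inf_mul mul one PM _ _ (pos_of_ne0 _ Htp)) in Hui.
    apply Hui. eapply (@fin_mono mul one PM); [ |exact ND].
    apply I1. exists t; auto.
  - apply (@one_ne0 mul one PM). apply le0_eq. apply I2. intros u [t [Ht ->]].
    destruct (classic (mul t (tau (fun x => B0 x /\ ltE t (c x))) = zeroE)) as [e|e].
    + rewrite e; apply le_refl.
    + exfalso; eauto.
Qed.
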